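(* If a series $\sum u_n$ of fuzzy numbers converges to a fuzzy number $\nu$, then it is $E_p$ summable to $\nu$.
   Context: $E^1$ denotes the space of fuzzy numbers (normal, fuzzy convex, upper semi-continuous fuzzy sets on $\mathbb{R}$ with compact support), with addition and scalar multiplication defined levelwise on $\alpha$-level sets $[u]_\alpha=[u^-_\alpha,u^+_\alpha]$, and metric $D(u,v)=\sup_{\alpha\in[0,1]}\max\{|u^-_\alpha-v^-_\alpha|,|u^+_\alpha-v^+_\alpha|\}$. For a series $\sum u_n$ of fuzzy numbers let $s_n=\sum_{k=0}^n u_k$; the series converges to $\nu\in E^1$ if $D(s_n,\nu)\to 0$. For $p>0$, a sequence $(s_n)$ of fuzzy numbers has Euler means $t^p_n=\frac{1}{(p+1)^n}\sum_{k=0}^n\binom{n}{k}p^{n-k}s_k$, and is $E_p$ summable to $\nu$ if $t^p_n\to\nu$ in $D$. A series $\sum u_n$ of fuzzy numbers is $E_p$ summable to $\nu$ if its sequence of partial sums $(s_n)$ is $E_p$ summable to $\nu$. *)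

(* Defs.v *)
From HB Require Import structures.
From mathcomp Require Import all_boot all_order all_algebra.
From mathcomp Require Import all_classical all_reals all_analysis.
Set Implicit Arguments. Unset Strict Implicit. Unset Printing Implicit Defensive.
Import Order.TTheory GRing.Theory Num.Theory.
Import numFieldNormedType.Exports.
Local Open Scope classical_set_scope.
Local Open Scope ring_scope.

Record fuzzy (R : realType) := Fuzzy {
  memb : R -> R;
  memb_range : forall x, 0 <= memb x <= 1;
  memb_normal : exists x, memb x = 1;
  memb_convex : forall x y (l : R), 0 <= l <= 1 ->
      Num.min (memb x) (memb y) <= memb (l * x + (1 - l) * y);
  memb_usc : forall a : R, closed [set x | a <= memb x];
  memb_supp : compact (closure [set x | 0 < memb x])
}.

Definition level (R : realType) (u : fuzzy R) (a : R) : set R :=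
  if a == 0 then closure [set x | 0 < memb u x] else [set x | a <= memb u x].

Definition lo (R : realType) (u : fuzzy R) (a : R) : R := inf (level u a).
Definition up (R : realType) (u : fuzzy R) (a : R) : R := sup (level u a).

Definition D (R : realType) (u v : fuzzy R) : R :=
  sup [set d | exists a : R, 0 <= a <= 1 /\
        d = Num.max `|lo u a - lo v a| `|up u a - up v a| ].

Definition lincomb_level (R : realType) (n : nat) (c : nat -> R)
    (v : nat -> fuzzy R) (a : R) : set R :=
  [set y | exists x : nat -> R,
     (forall k, (k <= n)%N -> level (v k) a (x k)) /\
     y = \sum_(k < n.+1) c k * x k].

(* w is the fuzzy number sum_{k=0}^n c_k v_k, operations defined levelwise *)
Definition is_lincomb (R : realType) (w : fuzzy R) (n : nat) (c : nat -> R)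
    (v : nat -> fuzzy R) : Prop :=
  forall a : R, 0 <= a <= 1 -> level w a = lincomb_level n c v a.

Definition partial_sums (R : realType) (u s : nat -> fuzzy R) : Prop :=
  forall n, is_lincomb (s n) n (fun _ => 1) u.

Definition euler_means (R : realType) (p : R) (s t : nat -> fuzzy R) : Prop :=
  forall n, is_lincomb (t n) n
    (fun k => 'C(n, k)%:R * p ^+ (n - k) / (p + 1) ^+ n) s.

Definition Dconv (R : realType) (s : nat -> fuzzy R) (nu : fuzzy R) : Prop :=
  (fun n => D (s n) nu) @ \oo --> (0 : R).

Definition series_conv (R : realType) (u : nat -> fuzzy R) (nu : fuzzy R) :=
  forall s, partial_sums u s -> Dconv s nu.

Definition series_Ep_summable (R : realType) (p : R) (u : nat -> fuzzy R)
    (nu : fuzzy R) :=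
  forall s t, partial_sums u s -> euler_means p s t -> Dconv t nu.

(* Main.v *)
Require Import Defs.
From HB Require Import structures.
From mathcomp Require Import all_boot all_order all_algebra.
From mathcomp Require Import all_classical all_reals all_analysis.
From mathcomp Require Import ring.
Import Order.TTheory GRing.Theory Num.Theory.
Import numFieldNormedType.Exports.
Local Open Scope classical_set_scope.
Local Open Scope ring_scope.

Section S.
Variable R : realType.

Lemma cb_inf (A : set R) B : A !=set0 -> closed A ->
  (forall x, A x -> `|x| <= B) -> A (inf A) /\ forall x, A x -> inf A <= x.
Proof.
move=> [x0 Ax0] cA bA.
have hl : has_lbound A.
  by exists (- B) => x /bA; rewrite ler_norml => /andP[].
split; last exact: ge_inf.
have cN : closed [set - x | x in A] by exact: closedN.
have ne : [set - x | x in A] !=set0 by exists (- x0), x0.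
have hu : has_ubound [set - x | x in A].
  exists B => _ [x /bA Ax <-]; rewrite (le_trans _ Ax) // -normrN ler_norm //.
have := closure_sup ne hu; rewrite -(proj1 (closure_id _) cN).
by case=> x Ax hx; rewrite /inf -hx opprK.
Qed.

Lemma cb_sup (A : set R) B : A !=set0 -> closed A ->
  (forall x, A x -> `|x| <= B) -> A (sup A) /\ forall x, A x -> x <= sup A.
Proof.
move=> ne cA bA.
have hu : has_ubound A.
  by exists B => x /bA; rewrite ler_norml => /andP[].
split; last exact: ub_le_sup.
by have := closure_sup ne hu; rewrite -(proj1 (closure_id _) cA).
Qed.


Lemma supp_bound (u : fuzzy R) : exists B : R,
  forall x, closure [set x | 0 < memb u x] x -> `|x| <= B.
Proof.
have [M [Mr HM]] := compact_bounded (@memb_supp _ u).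
exists (M + 1) => x Ax.
have h1 : M < M + 1 by rewrite ltrDl ltr01.
exact: (HM (M + 1) h1 x Ax).
Qed.

Lemma level_sub (u : fuzzy R) a : 0 <= a ->
  level u a `<=` closure [set x | 0 < memb u x].
Proof.
move=> a0; rewrite /level; case: eqP => [_|/eqP an0] x /= h; first exact: h.
apply: subset_closure => /=; apply: (lt_le_trans _ h).
by rewrite lt_neqAle eq_sym an0 a0.
Qed.

Lemma level_ne (u : fuzzy R) a : 0 <= a <= 1 -> level u a !=set0.
Proof.
case/andP=> a0 a1; have [x hx] := @memb_normal _ u; exists x.
rewrite /level; case: eqP => _ /=; last by rewrite hx.
by apply: subset_closure => /=; rewrite hx ltr01.
Qed.

Lemma level_closed (u : fuzzy R) a : closed (level u a).
Proof.
rewrite /level; case: eqP => _; first exact: closed_closure.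
exact: (@memb_usc _ u).
Qed.

Lemma fz_bound (u : fuzzy R) : exists B : R, forall a, 0 <= a <= 1 ->
  forall x, level u a x -> `|x| <= B.
Proof.
have [B HB] := supp_bound u; exists B => a /andP[a0 _] x /(@level_sub u a a0); exact: HB.
Qed.

Lemma lo_prop (u : fuzzy R) a : 0 <= a <= 1 ->
  level u a (lo u a) /\ forall x, level u a x -> lo u a <= x.
Proof.
move=> ha; have [B HB] := fz_bound u.
exact: (cb_inf _ _ (@level_ne u a ha) (level_closed u a) (HB a ha)).
Qed.

Lemma up_prop (u : fuzzy R) a : 0 <= a <= 1 ->
  level u a (up u a) /\ forall x, level u a x -> x <= up u a.
Proof.
move=> ha; have [B HB] := fz_bound u.
exact: (cb_sup _ _ (@level_ne u a ha) (level_closed u a) (HB a ha)).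
Qed.

Lemma lo_up_bound (u : fuzzy R) : exists B : R, forall a, 0 <= a <= 1 ->
  `|lo u a| <= B /\ `|up u a| <= B.
Proof.
have [B HB] := fz_bound u; exists B => a ha; split; apply: (HB a ha).
  exact: (@lo_prop u a ha).1.
exact: (@up_prop u a ha).1.
Qed.


Lemma lincomb_lo n c (v : nat -> fuzzy R) a : 0 <= a <= 1 ->
  (forall k, 0 <= c k) ->
  inf (lincomb_level n c v a) = \sum_(k < n.+1) c k * lo (v k) a.
Proof.
move=> ha c0; set y0 := \sum_(k < n.+1) _.
have Ly0 : lincomb_level n c v a y0.
  by exists (fun k => lo (v k) a); split => // k _; exact: (@lo_prop (v k) a ha).1.
have lb : lbound (lincomb_level n c v a) y0.
  move=> y [x [hx ->]]; apply: ler_sum => k _; apply: (ler_wpM2l (c0 k)).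
  exact: (@lo_prop (v k) a ha).2 (hx k (ltn_ord k)).
apply/eqP; rewrite eq_le; apply/andP; split.
  exact: (ge_inf (ex_intro _ y0 lb) Ly0).
exact: (lb_le_inf (ex_intro _ y0 Ly0) lb).
Qed.

Lemma lincomb_up n c (v : nat -> fuzzy R) a : 0 <= a <= 1 ->
  (forall k, 0 <= c k) ->
  sup (lincomb_level n c v a) = \sum_(k < n.+1) c k * up (v k) a.
Proof.
move=> ha c0; set y0 := \sum_(k < n.+1) _.
have Ly0 : lincomb_level n c v a y0.
  by exists (fun k => up (v k) a); split => // k _; exact: (@up_prop (v k) a ha).1.
have ub : ubound (lincomb_level n c v a) y0.
  move=> y [x [hx ->]]; apply: ler_sum => k _; apply: (ler_wpM2l (c0 k)).
  exact: (@up_prop (v k) a ha).2 (hx k (ltn_ord k)).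
apply/eqP; rewrite eq_le; apply/andP; split.
  exact: (ge_sup (ex_intro _ y0 Ly0) ub).
exact: (ub_le_sup (ex_intro _ y0 ub) Ly0).
Qed.

Lemma D_prop (u v : fuzzy R) :
  (forall a, 0 <= a <= 1 ->
     Num.max `|lo u a - lo v a| `|up u a - up v a| <= D u v) /\
  0 <= D u v /\
  (forall M, (forall a, 0 <= a <= 1 ->
     Num.max `|lo u a - lo v a| `|up u a - up v a| <= M) -> D u v <= M).
Proof.
rewrite /D.
set S := (X in sup X).
have [Bu HBu] := lo_up_bound u; have [Bv HBv] := lo_up_bound v.
have h01 : 0 <= (0:R) <= 1 by rewrite lexx ler01.
have ne : S !=set0 by eexists; exists 0; split.
have hu : has_ubound S.
  exists (Bu + Bv) => _ [a [ha ->]].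
  have [h1 h2] := HBu a ha; have [h3 h4] := HBv a ha.
  rewrite ge_max; apply/andP; split; apply: (le_trans (ler_normB _ _)); exact: lerD.
have h1 : forall a, 0 <= a <= 1 ->
     Num.max `|lo u a - lo v a| `|up u a - up v a| <= D u v.
  by move=> a ha; apply: ub_le_sup hu _ _; exists a.
split => //; split.
  apply: le_trans (h1 0 h01); by rewrite le_max normr_ge0.
by move=> M hM; apply: ge_sup ne _ => _ [a [ha ->]]; exact: hM.
Qed.


Variable p : R.
Hypothesis hp : 0 < p.

Definition cc (n k : nat) : R := 'C(n, k)%:R * p ^+ (n - k) / (p + 1) ^+ n.

Lemma p1_gt0 : 0 < p + 1.
Proof. by rewrite ltr_wpDr // ltW. Qed.

Lemma cc_ge0 n k : 0 <= cc n k.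
Proof.
rewrite /cc; apply: divr_ge0; last by rewrite exprn_ge0 // ltW // p1_gt0.
by rewrite mulr_ge0 // exprn_ge0 // ltW.
Qed.

Lemma pow_bin n : (p + 1) ^+ n = \sum_(k < n.+1) 'C(n, k)%:R * p ^+ (n - k).
Proof.
rewrite exprDn; apply: eq_bigr => i _.
by rewrite expr1n mulr1 mulr_natl.
Qed.

Lemma cc_sum n : \sum_(k < n.+1) cc n k = 1.
Proof.
rewrite /cc -mulr_suml -pow_bin divff //.
by rewrite expf_neq0 // gt_eqF // p1_gt0.
Qed.

Lemma cc_term n k : (k <= n)%N -> 'C(n, k)%:R * p ^+ (n - k) <= (p + 1) ^+ n.
Proof.
move=> kn; rewrite pow_bin (bigD1 (Ordinal (kn : (k < n.+1)%N))) //= lerDl.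
by apply: sumr_ge0 => i _; rewrite mulr_ge0 // exprn_ge0 // ltW.
Qed.

Lemma cc_mul n k : (k < n)%N -> cc n k * (n - k)%:R <= p * k.+1%:R.
Proof.
move=> kn.
have e1 : ('C(n, k) * (n - k) = k.+1 * 'C(n, k.+1))%N by rewrite mulnC -mul_bin_left.
have e2 : (n - k = (n - k.+1).+1)%N by rewrite subnSK.
have e3 : ('C(n, k)%:R * (n - k)%:R : R) = k.+1%:R * 'C(n, k.+1)%:R.
  by rewrite -!natrM e1.
have e4 : p ^+ (n - k) = p * p ^+ (n - k.+1) by rewrite e2 exprS.
have -> : cc n k * (n - k)%:R =
    p * k.+1%:R * ('C(n, k.+1)%:R * p ^+ (n - k.+1) / (p + 1) ^+ n).
  rewrite /cc e4; transitivity ((('C(n, k)%:R * (n - k)%:R) : R) * p * (p ^+ (n - k.+1) / (p + 1) ^+ n)); first by ring.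
  rewrite e3; ring.
rewrite -[X in _ <= X]mulr1 ler_wpM2l //; first by rewrite mulr_ge0 // ltW.
rewrite ler_pdivrMr ?exprn_gt0 ?p1_gt0 // mul1r.
exact: cc_term.
Qed.

Lemma cc_small n k K : (k < K)%N -> (K <= n)%N ->
  cc n k <= p * K%:R / (n - K).+1%:R.
Proof.
move=> kK Kn; rewrite ler_pdivlMr ?ltr0Sn //.
apply: (le_trans (y := cc n k * (n - k)%:R)).
  apply: ler_wpM2l; first exact: cc_ge0.
  rewrite ler_nat; apply: (@leq_trans (n - k.+1).+1); first by rewrite ltnS leq_sub2l.
  by rewrite subnSK // (leq_trans kK Kn).
apply: (le_trans (@cc_mul n k (leq_trans kK Kn))).
apply: ler_wpM2l; [exact: ltW | by rewrite ler_nat].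
Qed.



Lemma comb_bound n (x : nat -> R) (y : R) (e : nat -> R) :
  (forall k, `|x k - y| <= e k) ->
  `|\sum_(k < n.+1) cc n k * x k - y| <= \sum_(k < n.+1) cc n k * e k.
Proof.
move=> he.
have -> : y = \sum_(k < n.+1) cc n k * y by rewrite -mulr_suml cc_sum mul1r.
rewrite -sumrB; apply: (le_trans (ler_norm_sum _ _ _)); apply: ler_sum => k _.
by rewrite -mulrBr normrM ger0_norm ?cc_ge0 //; apply: ler_wpM2l; [exact: cc_ge0|].
Qed.

Lemma t_bound (s t : nat -> fuzzy R) (nu : fuzzy R) :
  euler_means p s t -> forall n,
  D (t n) nu <= \sum_(k < n.+1) cc n k * D (s k) nu.
Proof.
move=> ht n; apply: (proj2 (proj2 (D_prop (t n) nu))) => a ha.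
have c0 : forall k, 0 <= cc n k by move=> k; exact: cc_ge0.
have hlo : lo (t n) a = \sum_(k < n.+1) cc n k * lo (s k) a.
  by rewrite /lo (ht n a ha); exact: (@lincomb_lo n (cc n) s a ha c0).
have hup : up (t n) a = \sum_(k < n.+1) cc n k * up (s k) a.
  by rewrite /up (ht n a ha); exact: (@lincomb_up n (cc n) s a ha c0).
rewrite ge_max hlo hup; apply/andP; split.
  apply: (@comb_bound n (fun k => lo (s k) a) _ (fun k => D (s k) nu)) => k.
  apply: (le_trans _ ((proj1 (D_prop (s k) nu)) a ha)); by rewrite le_max lexx.
apply: (@comb_bound n (fun k => up (s k) a) _ (fun k => D (s k) nu)) => k.
apply: (le_trans _ ((proj1 (D_prop (s k) nu)) a ha)); by rewrite le_max lexx orbT.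
Qed.

End S.

Theorem mainTheorem1 (R : realType) (p : R) (hp : 0 < p)
    (u : nat -> fuzzy R) (nu : fuzzy R) :
  series_conv u nu -> series_Ep_summable p u nu.
Proof.
move=> hconv s t hs ht.
have e := hconv s hs.
have e0 : forall k, 0 <= D (s k) nu by move=> k; exact: (proj1 (proj2 (@D_prop R (s k) nu))).
have t0 : forall k, 0 <= D (t k) nu by move=> k; exact: (proj1 (proj2 (@D_prop R (t k) nu))).
apply/cvgrPdist_le => eps eps0.
have eps2 : 0 < eps / 2 by rewrite divr_gt0.
move/cvgrPdist_le: e => /(_ _ eps2) [K _ HK].
set M := \sum_(0 <= k < K) D (s k) nu.
have M0 : 0 <= M by apply: sumr_ge0 => k _.
set X := p * K%:R * M / (eps / 2).
exists (K + Num.truncn X)%N => // n /= Nn.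
have Kn : (K <= n)%N by apply: leq_trans Nn; rewrite leq_addr.
rewrite sub0r normrN ger0_norm //.
apply: (le_trans (@t_bound R p hp s t nu ht n)).
rewrite -(big_mkord xpredT (fun k => cc R p n k * D (s k) nu)).
rewrite (big_cat_nat _ (n:=K)) //=; last by rewrite ltnW.
rewrite [X in _ <= X](splitr eps); apply: lerD.
  apply: (le_trans (y := \sum_(0 <= k < K) p * K%:R / (n - K).+1%:R * D (s k) nu)).
    apply: ler_sum_nat => k /andP[_ kK]; apply: ler_wpM2r; first exact: e0.
    exact: (@cc_small R p hp).
  rewrite -mulr_sumr -/M mulrAC ler_pdivrMr ?ltr0Sn //.
  have hX : X < (n - K).+1%:R.
    apply: (lt_le_trans (truncnS_gt X)); rewrite ler_nat ltnS.
    by rewrite leq_subRL // addnC.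
  apply: (le_trans (y := eps / 2 * X)).
    by rewrite /X mulrCA divff ?mulr1 // gt_eqF.
  by rewrite ler_pM2l // ltW.
apply: (le_trans (y := \sum_(K <= k < n.+1) cc R p n k * (eps / 2))).
  apply: ler_sum_nat => k /andP[Kk _]; apply: ler_wpM2l; first exact: (@cc_ge0 R p hp).
  have := HK k Kk; rewrite /= sub0r normrN ger0_norm //.
apply: (le_trans (y := \sum_(0 <= k < n.+1) cc R p n k * (eps / 2))); last first.
  by rewrite big_mkord -mulr_suml (@cc_sum R p hp) mul1r.
rewrite [X in _ <= X](big_cat_nat _ (n:=K)) //=; last by rewrite ltnW.
rewrite lerDr; apply: sumr_ge0 => k _; rewrite mulr_ge0 ?(@cc_ge0 R p hp) //.
by rewrite ltW.
Qed.
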